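(* Let $\mathcal{E}$ be a quantum channel on $\mathbb{C}^d$, $M \ge 2$ and $N \ge 2$ integers. Let $\hat V_1,\dots,\hat V_M$ be i.i.d. from a unitary $4$-design on $\mathbb{C}^d$, $|\psi_i\rangle = \hat V_i|0\rangle$, $f_i := f_{\mathcal{E}}(\psi_i)$, and, conditional on $\psi_i$, let $X_{i,1},\dots,X_{i,N}\in\{0,1\}$ be i.i.d. Bernoulli($f_i$), with the data for different $i$ independent. Let $\hat F = \frac{1}{MN}\sum_{i=1}^M\sum_{s=1}^N X_{i,s}$. Then $$\mathrm{Var}(\hat F) = \frac{D^2}{M} + \frac{1}{MN}\left(F - \int d\psi\, f_{\mathcal{E}}(\psi)^2\right),$$ and in particular $\mathrm{Var}(\hat F) \le \frac{D^2}{M} + \frac{1}{4MN}$.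
   Context: $f_{\mathcal{E}}(\psi) := \langle\psi|\mathcal{E}(|\psi\rangle\langle\psi|)|\psi\rangle$. With $d\psi$ the Haar-induced probability measure on unit vectors of $\mathbb{C}^d$, $F := \int d\psi\, f_{\mathcal{E}}(\psi)$ and $D^2 := \int d\psi\, f_{\mathcal{E}}(\psi)^2 - F^2$. $|0\rangle$ is a fixed unit vector. A unitary $t$-design is a probability distribution on $U(d)$ such that for all $k\le t$ and all operators $\hat O$ on $(\mathbb{C}^d)^{\otimes k}$, $\mathbb{E}[\hat V^{\otimes k}\hat O\hat V^{\dagger\otimes k}] = \int \hat U^{\otimes k}\hat O\hat U^{\dagger\otimes k}\,d\hat U$ with $d\hat U$ the Haar measure. *)

(* Defs.v *)
From HB Require Import structures.
From mathcomp Require Import all_boot all_order all_algebra.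
From mathcomp Require Import all_classical all_reals all_analysis.
From mathcomp.real_closed Require Import complex mxtens.
Set Implicit Arguments. Unset Strict Implicit. Unset Printing Implicit Defensive.
Import Order.TTheory GRing.Theory Num.Theory.
Import numFieldTopology.Exports numFieldNormedType.Exports.
Local Open Scope ring_scope.

Section Defs.
Variable R : realType.
Local Notation C := (R[i]).

Definition adjmx m n (A : 'M[C]_(m, n)) : 'M[C]_(n, m) := (map_mx Num.Def.conjC A)^T.

Fixpoint tdim (d k : nat) : nat := if k is k'.+1 then (d * tdim d k')%N else 1%N.

Fixpoint tpow d (A : 'M[C]_d) (k : nat) {struct k} : 'M[C]_(tdim d k) :=
  match k as k0 return 'M[C]_(tdim d k0) with
  | 0 => 1%:M
  | k'.+1 => A *t tpow A k'
  end.

Definition psdmx n (A : 'M[C]_n) : Prop :=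
  adjmx A = A /\ forall v : 'cV[C]_n, 0 <= (adjmx v *m A *m v) 0 0.

(* ampliation (id_n (x) E) acting on operators on C^n (x) C^d *)
Definition ampl n d (E : 'M[C]_d -> 'M[C]_d) (X : 'M[C]_(n * d)) : 'M[C]_(n * d) :=
  \sum_(i < n) \sum_(j < n)
     (delta_mx i j : 'M[C]_n) *t
       E (\matrix_(a, b) X (mxtens_index (i, a)) (mxtens_index (j, b))).

Definition quantum_channel d (E : 'M[C]_d -> 'M[C]_d) : Prop :=
  [/\ (forall (a : C) X Y, E (a *: X + Y) = a *: E X + E Y),
      (forall X, \tr (E X) = \tr X) &
      (forall n (X : 'M[C]_(n * d)), psdmx X -> psdmx (ampl E X))].

(* f_E(psi) = <psi| E(|psi><psi|) |psi>  (a real number for a channel; we take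
   its real part) *)
Definition fE d (E : 'M[C]_d -> 'M[C]_d) (psi : 'cV[C]_d) : R :=
  complex.Re ((adjmx psi *m E (psi *m adjmx psi) *m psi) 0 0).

Definition mx_measurable {dT} (T : measurableType dT) m n (V : T -> 'M[C]_(m, n)) : Prop :=
  forall i j, measurable_fun setT (fun w => complex.Re (V w i j)) /\
              measurable_fun setT (fun w => complex.Im (V w i j)).

Definition Ex {dT} (T : measurableType dT) (P : probability T R) (g : T -> R) : R :=
  Rintegral P setT g.

Definition mxEx {dT} (T : measurableType dT) (P : probability T R) m n
  (G : T -> 'M[C]_(m, n)) : 'M[C]_(m, n) :=
  \matrix_(i, j) Complex (Ex P (fun w => complex.Re (G w i j)))
                         (Ex P (fun w => complex.Im (G w i j))).

Definition cont_test d (h : 'M[C]_d -> R) : Prop :=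
  exists g : 'M[R]_d * 'M[R]_d -> R, continuous g /\
    forall A, h A = g (map_mx (@complex.Re R) A, map_mx (@complex.Im R) A).

Definition is_haar {dT} (T : measurableType dT) (P : probability T R) d
  (U : T -> 'M[C]_d) : Prop :=
  [/\ (forall w, U w \is unitarymx), mx_measurable U &
      forall W : 'M[C]_d, W \is unitarymx -> forall h, cont_test h ->
        Ex P (fun w => h (W *m U w)) = Ex P (fun w => h (U w))].

Definition unitary_design (t : nat) {dH} (TH : measurableType dH) (PH : probability TH R)
  d (UH : TH -> 'M[C]_d) {dT} (T : measurableType dT) (P : probability T R)
  (V : T -> 'M[C]_d) : Prop :=
  [/\ (forall w, V w \is unitarymx), mx_measurable V &
      forall k, (k <= t)%N -> forall O : 'M[C]_(tdim d k),
        mxEx P (fun w => tpow (V w) k *m O *m tpow (adjmx (V w)) k)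
        = mxEx PH (fun w => tpow (UH w) k *m O *m tpow (adjmx (UH w)) k)].

Definition bern (p : R) (b : bool) : R := if b then p else 1 - p.

(* Joint law of the data (V_1..V_M, X_{i,s}) on (Om, P): the V_i are i.i.d. with
   the law of W (on (T', P')), and conditionally on psi_i = V_i v0 the
   X_{i,1..N} are i.i.d. Bernoulli(f_E(psi_i)), independently across i.
   Expressed by the product formula against all test functions
   prod_i h_i(V_i) * 1{X = x}. *)
Definition sampling_scheme {dO} (Om : measurableType dO) (P : probability Om R)
  (M N d : nat) (E : 'M[C]_d -> 'M[C]_d) (v0 : 'cV[C]_d)
  (V : 'I_M -> Om -> 'M[C]_d) (X : 'I_M -> 'I_N -> Om -> bool)
  {d'} (T' : measurableType d') (P' : probability T' R) (W : T' -> 'M[C]_d) : Prop :=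
  [/\ (forall i w, V i w \is unitarymx),
      (forall i, mx_measurable (V i)),
      (forall i s, measurable (X i s @^-1` [set true])) &
      forall h : 'I_M -> 'M[C]_d -> R, (forall i, cont_test (h i)) ->
      forall x : 'I_M -> 'I_N -> bool,
        Ex P (fun w => (\prod_(i < M) h i (V i w)) *
                       ([forall i, forall s, X i s w == x i s])%:R)
        = \prod_(i < M) Ex P' (fun u => h i (W u) *
                               \prod_(s < N) bern (fE E (W u *m v0)) (x i s))].

Definition Fhat {dO} (Om : measurableType dO) (M N : nat)
  (X : 'I_M -> 'I_N -> Om -> bool) (w : Om) : R :=
  ((M * N)%:R)^-1 * \sum_(i < M) \sum_(s < N) (X i s w)%:R.

Definition Var {dT} (T : measurableType dT) (P : probability T R) (g : T -> R) : R :=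
  Ex P (fun w => (g w - Ex P g) ^+ 2).

End Defs.

(* Main.v *)
Require Import Defs.
From HB Require Import structures.
From mathcomp Require Import all_boot all_order all_algebra.
From mathcomp Require Import all_classical all_reals all_analysis.
From mathcomp.real_closed Require Import complex mxtens.
From mathcomp Require Import measurable_realfun lra ring.
Import Order.TTheory GRing.Theory Num.Theory.
Local Open Scope ring_scope.

Set Implicit Arguments. Unset Strict Implicit. Unset Printing Implicit Defensive.
Import Order.TTheory GRing.Theory Num.Theory.
Local Open Scope ring_scope.


Section RGood.
Context (R : realType) {dT : measure_display} (T : measurableType dT) (P : probability T R).

Definition rgood (g : T -> R) := measurable_fun setT g /\ exists c : R, forall w, `|g w| <= c.

Lemma rgood_ext f g : (forall w, f w = g w) -> rgood g -> rgood f.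
Proof. by move=> e; have -> : f = g by apply: funext. Qed.

Lemma rgood_cst c : rgood (fun _ => c).
Proof. split; first exact: measurable_cst. by exists `|c|. Qed.

Lemma rgood_add f g : rgood f -> rgood g -> rgood (fun w => f w + g w).
Proof.
move=> [mf [a ha]] [mg [b hb]]; split; first exact: measurable_funD.
exists (a + b) => w; apply: le_trans (ler_normD _ _) _; exact: lerD.
Qed.

Lemma rgood_mul f g : rgood f -> rgood g -> rgood (fun w => f w * g w).
Proof.
move=> [mf [a ha]] [mg [b hb]]; split; first exact: measurable_funM.
exists (a * b) => w; rewrite normrM; apply: ler_pM => //.
Qed.

Lemma rgood_opp f : rgood f -> rgood (fun w => - f w).
Proof.
move=> [mf [a ha]]; split; first exact: measurable_funN.
by exists a => w; rewrite normrN.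
Qed.

Lemma rgood_sum (I : Type) (s : seq I) (F : I -> T -> R) :
  (forall i, rgood (F i)) -> rgood (fun w => \sum_(i <- s) F i w).
Proof.
move=> h; elim: s => [|x s ih].
  by under eq_fun do rewrite big_nil; exact: rgood_cst.
under eq_fun do rewrite big_cons; exact: rgood_add.
Qed.

Lemma rgood_prod (I : Type) (s : seq I) (F : I -> T -> R) :
  (forall i, rgood (F i)) -> rgood (fun w => \prod_(i <- s) F i w).
Proof.
move=> h; elim: s => [|x s ih].
  by under eq_fun do rewrite big_nil; exact: rgood_cst.
under eq_fun do rewrite big_cons; exact: rgood_mul.
Qed.

Lemma rgood_int g : rgood g -> P.-integrable setT (EFin \o g).
Proof.
move=> [mg [c hc]].
apply: (@le_integrable _ _ _ P setT _ _ (EFin \o cst c)) => //.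
- exact/measurable_EFinP.
- by move=> w _ /=; rewrite lee_fin; exact: le_trans (hc w) (ler_norm c).
- exact: finite_measure_integrable_cst.
Qed.

Lemma Ex_add f g : rgood f -> rgood g -> Ex P (fun w => f w + g w) = Ex P f + Ex P g.
Proof. by move=> hf hg; rewrite /Ex RintegralD //; exact: rgood_int. Qed.

Lemma Ex_scale c g : rgood g -> Ex P (fun w => c * g w) = c * Ex P g.
Proof. by move=> hg; rewrite /Ex RintegralZl //; exact: rgood_int. Qed.

Lemma Ex_cst c : Ex P (fun _ => c) = c.
Proof.
rewrite /Ex Rintegral_cst //; have h := probability_setT P.
by transitivity (c * fine (1%E : \bar R)); [congr (c * fine _); exact: h | rewrite mulr1].
Qed.

Lemma Ex_sum (I : Type) (s : seq I) (F : I -> T -> R) :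
  (forall i, rgood (F i)) -> Ex P (fun w => \sum_(i <- s) F i w) = \sum_(i <- s) Ex P (F i).
Proof.
move=> h; elim: s => [|x s ih].
  by under eq_fun do rewrite big_nil; rewrite big_nil Ex_cst.
under eq_fun do rewrite big_cons; rewrite big_cons Ex_add ?ih //.
exact: rgood_sum.
Qed.

Lemma Ex_ge0 g : (forall w, 0 <= g w) -> 0 <= Ex P g.
Proof. by move=> h; apply: Rintegral_ge0. Qed.

Lemma Ex_ext f g : (forall w, f w = g w) -> Ex P f = Ex P g.
Proof. by move=> h; congr (Ex P _); apply: funext. Qed.

End RGood.

Unset Implicit Arguments.
Import Order.TTheory GRing.Theory Num.Theory.
Local Open Scope ring_scope.

Section Wt.
Variable R : comRingType.
Variables (T : finType) (w g : T -> R).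
Hypothesis w1 : \sum_t w t = 1.

Lemma prod_pick n (j : 'I_n) (a : 'I_n -> R) :
  \prod_(i < n) (if i == j then a i else 1) = a j.
Proof. by rewrite -big_mkcond big_pred1_eq. Qed.

Lemma sum_ffun_prod n (h : 'I_n -> T -> R) :
  \sum_(x : {ffun 'I_n -> T}) \prod_(i < n) h i (x i) = \prod_(i < n) \sum_(t : T) h i t.
Proof. by rewrite bigA_distr_bigA. Qed.


Lemma wmom0 n : \sum_(x : {ffun 'I_n -> T}) \prod_(i < n) w (x i) = 1.
Proof. by rewrite (@sum_ffun_prod _ (fun _ => w)) big1 // => i _; rewrite w1. Qed.

Lemma wmom1 n : \sum_(x : {ffun 'I_n -> T}) (\prod_(i < n) w (x i)) * \sum_(i < n) g (x i)
  = n%:R * \sum_t w t * g t.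
Proof.
under eq_bigr do rewrite mulr_sumr.
rewrite exchange_big /=.
transitivity (\sum_(j < n) \sum_t w t * g t); last by rewrite sumr_const card_ord mulr_natl.
apply: eq_bigr => j _.
transitivity (\sum_(x : {ffun 'I_n -> T}) \prod_(i < n)
    (w (x i) * (if i == j then g (x i) else 1))).
  by apply: eq_bigr => x _; rewrite big_split /= prod_pick.
rewrite (@sum_ffun_prod _ (fun i t => w t * (if i == j then g t else 1))) (bigD1 j) //= eqxx [X in _ * X]big1 ?mulr1 //.
by move=> i /negbTE ->; under eq_bigr do rewrite mulr1; rewrite w1.
Qed.

Lemma wmom2 n : \sum_(x : {ffun 'I_n -> T}) (\prod_(i < n) w (x i)) * (\sum_(i < n) g (x i)) ^+ 2
  = n%:R * \sum_t w t * g t ^+ 2 + (n * n.-1)%:R * (\sum_t w t * g t) ^+ 2.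
Proof.
under eq_bigr do rewrite expr2 mulr_suml mulr_sumr.
rewrite exchange_big /=.
transitivity (\sum_(j < n) (\sum_t w t * g t ^+ 2 + n.-1%:R * (\sum_t w t * g t) ^+ 2)).
  apply: eq_bigr => j _.
  under eq_bigr do rewrite mulr_sumr.
  under eq_bigr do rewrite mulr_sumr.
  rewrite exchange_big /= (bigD1 j) //=; congr (_ + _).
    transitivity (\sum_(x : {ffun 'I_n -> T}) \prod_(i < n)
      (w (x i) * (if i == j then g (x i) ^+ 2 else 1))).
      by apply: eq_bigr => x _; rewrite big_split /= prod_pick expr2 mulrA.
    rewrite (@sum_ffun_prod _ (fun i t => w t * (if i == j then g t ^+ 2 else 1))) (bigD1 j) //= eqxx [X in _ * X]big1 ?mulr1 //.
    by move=> i /negbTE ->; under eq_bigr do rewrite mulr1; rewrite w1.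
  transitivity (\sum_(k < n | k != j) (\sum_t w t * g t) ^+ 2); last first.
    rewrite sumr_const mulr_natl; congr (_ *+ _).
    by rewrite cardC1 card_ord.
  apply: eq_bigr => k kj.
  transitivity (\sum_(x : {ffun 'I_n -> T}) \prod_(i < n)
      (w (x i) * (if i == j then g (x i) else 1) * (if i == k then g (x i) else 1))).
    apply: eq_bigr => x _; rewrite big_split big_split /= !prod_pick mulrA.
    by rewrite [_ * g (x k)]mulrC.
  rewrite (@sum_ffun_prod _ (fun i t => w t * (if i == j then g t else 1) * (if i == k then g t else 1))) (bigD1 j) //= (bigD1 k) //= [X in _ * (_ * X)]big1 ?mulr1.
    rewrite (negbTE kj) eq_sym (negbTE kj) !eqxx expr2; congr (_ * _).
      by apply: eq_bigr => t _; rewrite mulr1.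
    by apply: eq_bigr => t _; rewrite mulr1.
  move=> i /andP [ik ij]; rewrite (negbTE ik) (negbTE ij).
  by under eq_bigr do rewrite !mulr1; rewrite w1.
rewrite big_split /= !sumr_const card_ord !mulr_natl -!mulrnA.
by rewrite mulnC.
Qed.
End Wt.

Set Implicit Arguments. Unset Strict Implicit. Unset Printing Implicit Defensive.
Import Order.TTheory GRing.Theory Num.Theory.
Local Open Scope ring_scope.


Section Forms.
Variable R : realType.
Local Notation C := (R[i]).
Variable d : nat.

Definition isform k (phi : 'M[C]_d -> C) :=
  exists G : 'M[C]_(tdim d k), forall rho, phi rho = \tr (G *m tpow rho k).

Lemma form_ext k phi psi : (forall rho, phi rho = psi rho) -> isform k psi -> isform k phi.
Proof. by move=> e [G hG]; exists G => rho; rewrite e hG. Qed.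

Lemma form_add k phi psi : isform k phi -> isform k psi ->
  isform k (fun rho => phi rho + psi rho).
Proof.
move=> [G hG] [H hH]; exists (G + H) => rho.
by rewrite hG hH mulmxDl mxtraceD.
Qed.

Lemma form_scale k c phi : isform k phi -> isform k (fun rho => c * phi rho).
Proof.
move=> [G hG]; exists (c *: G) => rho.
by rewrite hG -scalemxAl mxtraceZ.
Qed.

Lemma form_zero k : isform k (fun _ => 0).
Proof. by exists 0 => rho; rewrite mul0mx mxtrace0. Qed.

Lemma form_sum k (I : Type) (s : seq I) (F : I -> 'M[C]_d -> C) :
  (forall i, isform k (F i)) -> isform k (fun rho => \sum_(i <- s) F i rho).
Proof.
move=> h; elim: s => [|x s ih].
  by apply: form_ext (form_zero k) => rho; rewrite big_nil.
by apply: form_ext (form_add (h x) ih) => rho; rewrite big_cons.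
Qed.

Lemma form_const c : isform 0 (fun _ => c).
Proof.
exists (c%:M) => rho /=.
by rewrite mulmx1 mxtrace_scalar.
Qed.

Lemma tr_delta n (i j : 'I_n) (A : 'M[C]_n) : \tr (delta_mx i j *m A) = A j i.
Proof.
rewrite /mxtrace (bigD1 i) //= big1 ?addr0.
  rewrite mxE (bigD1 j) //= big1 ?addr0; first by rewrite mxE !eqxx mul1r.
  by move=> k kj; rewrite mxE (negbTE kj) andbF mul0r.
move=> k ki; rewrite mxE big1 // => l _; rewrite mxE (negbTE ki) mul0r //.
Qed.

Lemma tr_tens m n (A : 'M[C]_m) (B : 'M[C]_n) : \tr (A *t B) = \tr A * \tr B.
Proof.
rewrite /mxtrace mulr_sum; apply: eq_bigr => i _.
by rewrite mxE.
Qed.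

Lemma formS k a b phi : isform k phi -> isform k.+1 (fun rho => rho a b * phi rho).
Proof.
move=> [G hG]; exists (delta_mx b a *t G) => rho /=.
by rewrite tensmx_mul tr_tens tr_delta hG.
Qed.

Lemma form_entry k r s : isform k (fun rho => tpow rho k r s).
Proof. by exists (delta_mx s r) => rho; rewrite tr_delta. Qed.

Lemma tr_expand n (G A : 'M[C]_n) : \tr (G *m A) = \sum_i \sum_j G i j * A j i.
Proof. by rewrite /mxtrace; apply: eq_bigr => i _; rewrite mxE. Qed.

Lemma form_mul k l phi psi : isform k phi -> isform l psi ->
  isform (k + l) (fun rho => phi rho * psi rho).
Proof.
elim: k phi => [|k ih] phi [G hG] hpsi.
  rewrite add0n; apply: form_ext (form_scale (G ord0 ord0) hpsi) => rho.
  rewrite hG /= mulmx1 /mxtrace big_ord1. by [].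
change (isform (k + l).+1 (fun rho => phi rho * psi rho)).
apply: form_ext (@form_sum _ _ _ (fun i rho => \sum_j G i j *
   (rho (mxtens_unindex j).1 (mxtens_unindex i).1 *
    (tpow rho k (mxtens_unindex j).2 (mxtens_unindex i).2 * psi rho))) _).
  move=> rho; rewrite hG /= tr_expand mulr_suml; apply: eq_bigr => i _.
  rewrite mulr_suml; apply: eq_bigr => j _.
  by rewrite mxE !mulrA.
move=> i; apply: form_sum => j; apply: form_scale; apply: formS.
apply: ih hpsi; exact: form_entry.
Qed.

End Forms.

Set Implicit Arguments. Unset Strict Implicit. Unset Printing Implicit Defensive.
Import Order.TTheory GRing.Theory Num.Theory.
Local Open Scope ring_scope.


Section CAlg.
Variable R : realType.
Local Notation C := (R[i]).
Lemma Re_add (x y : C) : complex.Re (x + y) = complex.Re x + complex.Re y.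
Proof. by case: x => a b; case: y => c e. Qed.
Lemma Im_add (x y : C) : complex.Im (x + y) = complex.Im x + complex.Im y.
Proof. by case: x => a b; case: y => c e. Qed.
Lemma Re_mul (x y : C) : complex.Re (x * y) = complex.Re x * complex.Re y - complex.Im x * complex.Im y.
Proof. by case: x => a b; case: y => c e. Qed.
Lemma Im_mul (x y : C) : complex.Im (x * y) = complex.Re x * complex.Im y + complex.Im x * complex.Re y.
Proof. by case: x => a b; case: y => c e. Qed.
Lemma Re_conj (x : C) : complex.Re (Num.conj x) = complex.Re x.
Proof. by case: x => a b. Qed.
Lemma Im_conj (x : C) : complex.Im (Num.conj x) = - complex.Im x.
Proof. by case: x => a b. Qed.
Lemma Re0 : complex.Re (0 : C) = 0. Proof. by []. Qed.
Lemma Im0 : complex.Im (0 : C) = 0. Proof. by []. Qed.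
Lemma Re_sum (I : Type) (s : seq I) (F : I -> C) :
  complex.Re (\sum_(i <- s) F i) = \sum_(i <- s) complex.Re (F i).
Proof. exact: (big_morph _ Re_add Re0). Qed.
Lemma Im_sum (I : Type) (s : seq I) (F : I -> C) :
  complex.Im (\sum_(i <- s) F i) = \sum_(i <- s) complex.Im (F i).
Proof. exact: (big_morph _ Im_add Im0). Qed.
End CAlg.

Section CGood.
Variable R : realType.
Local Notation C := (R[i]).
Context {dT : measure_display} (T : measurableType dT).

Definition cgood (g : T -> C) :=
  rgood (fun w => complex.Re (g w)) /\ rgood (fun w => complex.Im (g w)).

Lemma cgood_cst c : cgood (fun _ => c).
Proof. by split; apply: rgood_cst. Qed.

Lemma cgood_add f g : cgood f -> cgood g -> cgood (fun w => f w + g w).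
Proof.
move=> [h1 h2] [h3 h4]; split.
  by under eq_fun do rewrite Re_add; apply: rgood_add.
by under eq_fun do rewrite Im_add; apply: rgood_add.
Qed.

Lemma cgood_mul f g : cgood f -> cgood g -> cgood (fun w => f w * g w).
Proof.
move=> [h1 h2] [h3 h4]; split.
  by under eq_fun do rewrite Re_mul; apply: rgood_add; [|apply: rgood_opp]; apply: rgood_mul.
by under eq_fun do rewrite Im_mul; apply: rgood_add; apply: rgood_mul.
Qed.

Lemma cgood_conj f : cgood f -> cgood (fun w => Num.conj (f w)).
Proof.
move=> [h1 h2]; split.
  by under eq_fun do rewrite Re_conj.
by under eq_fun do rewrite Im_conj; apply: rgood_opp.
Qed.

Lemma cgood_sum (I : Type) (s : seq I) (F : I -> T -> C) :
  (forall i, cgood (F i)) -> cgood (fun w => \sum_(i <- s) F i w).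
Proof.
move=> h; split.
  by under eq_fun do rewrite Re_sum; apply: rgood_sum => i; case: (h i).
by under eq_fun do rewrite Im_sum; apply: rgood_sum => i; case: (h i).
Qed.

Definition mgood m n (A : T -> 'M[C]_(m, n)) := forall i j, cgood (fun w => A w i j).

Lemma mgood_cst m n (B : 'M[C]_(m, n)) : mgood (fun _ => B).
Proof. by move=> i j; apply: cgood_cst. Qed.

Lemma mgood_mul m n p (A : T -> 'M[C]_(m, n)) (B : T -> 'M[C]_(n, p)) :
  mgood A -> mgood B -> mgood (fun w => A w *m B w).
Proof.
move=> hA hB i j; under eq_fun do rewrite mxE.
by apply: cgood_sum => k; apply: cgood_mul.
Qed.

Lemma mgood_tens m n p q (A : T -> 'M[C]_(m, n)) (B : T -> 'M[C]_(p, q)) :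
  mgood A -> mgood B -> mgood (fun w => A w *t B w).
Proof.
move=> hA hB i j; under eq_fun do rewrite mxE.
by apply: cgood_mul.
Qed.

Lemma mgood_tpow d (A : T -> 'M[C]_d) k : mgood A -> mgood (fun w => tpow (A w) k).
Proof.
move=> hA; elim: k => [|k ih] /=; first exact: mgood_cst.
exact: mgood_tens.
Qed.

Lemma mgood_adj m n (A : T -> 'M[C]_(m, n)) : mgood A -> mgood (fun w => adjmx (A w)).
Proof.
move=> hA i j; under eq_fun do rewrite !mxE.
exact: cgood_conj.
Qed.

End CGood.

From mathcomp Require Import lra.
Section Unit.
Variable R : realType.
Local Notation C := (R[i]).

Lemma unitary_entry_bound d (V : 'M[C]_d) i j : V \is unitarymx ->
  `|complex.Re (V i j)| <= 1 /\ `|complex.Im (V i j)| <= 1.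
Proof.
move=> /unitarymxP h.
have e : \sum_k (complex.Re (V i k) ^+ 2 + complex.Im (V i k) ^+ 2) = 1.
  have := congr1 (fun A : 'M[C]_d => complex.Re (A i i)) h.
  rewrite /= !mxE eqxx /= Re_sum => <-; apply: eq_bigr => k _.
  by rewrite !mxE Re_mul Re_conj Im_conj !expr2 mulrN opprK.
have hle : complex.Re (V i j) ^+ 2 + complex.Im (V i j) ^+ 2 <= 1.
  rewrite -e (bigD1 j) //= lerDl; apply: sumr_ge0 => k _.
  by apply: addr_ge0; apply: sqr_ge0.
set a := complex.Re _ in hle *; set b := complex.Im _ in hle *.
split; rewrite ler_norml; apply/andP; split; nra.
Qed.
End Unit.

Lemma mgood_unitary (R : realType) {dT : measure_display} (T : measurableType dT) d
  (V : T -> 'M[R[i]]_d) :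
  (forall w, V w \is unitarymx) -> mx_measurable V -> mgood V.
Proof.
move=> hU hM i j; have [m1 m2] := hM i j; split; split => //; exists 1 => w.
  by case: (unitary_entry_bound i j (hU w)).
by case: (unitary_entry_bound i j (hU w)).
Qed.

Set Implicit Arguments. Unset Strict Implicit. Unset Printing Implicit Defensive.
Import Order.TTheory GRing.Theory Num.Theory.
Local Open Scope ring_scope.


Section ExTr.
Variable R : realType.
Local Notation C := (R[i]).
Context {dT : measure_display} (T : measurableType dT) (P : probability T R).

Lemma Re_tr n (G A : 'M[C]_n) : complex.Re (\tr (G *m A)) =
  \sum_i \sum_j (complex.Re (G i j) * complex.Re (A j i) - complex.Im (G i j) * complex.Im (A j i)).
Proof.
rewrite tr_expand Re_sum; apply: eq_bigr => i _; rewrite Re_sum.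
by apply: eq_bigr => j _; rewrite Re_mul.
Qed.

Lemma rgood_Re_tr n (G : 'M[C]_n) (Tm : T -> 'M[C]_n) : mgood Tm ->
  rgood (fun u => complex.Re (\tr (G *m Tm u))).
Proof.
move=> h; under eq_fun do rewrite Re_tr.
apply: rgood_sum => i; apply: rgood_sum => j.
have [h1 h2] := h j i.
apply: rgood_add; first by apply: rgood_mul => //; apply: rgood_cst.
by apply: rgood_opp; apply: rgood_mul => //; apply: rgood_cst.
Qed.

Lemma Ex_Re_tr n (G : 'M[C]_n) (Tm : T -> 'M[C]_n) : mgood Tm ->
  Ex P (fun u => complex.Re (\tr (G *m Tm u))) =
  \sum_i \sum_j (complex.Re (G i j) * complex.Re (mxEx P Tm j i)
                 - complex.Im (G i j) * complex.Im (mxEx P Tm j i)).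
Proof.
move=> h; under eq_fun do rewrite Re_tr.
rewrite Ex_sum; last first.
  move=> i; apply: rgood_sum => j; have [h1 h2] := h j i.
  apply: rgood_add; first by apply: rgood_mul => //; apply: rgood_cst.
  by apply: rgood_opp; apply: rgood_mul => //; apply: rgood_cst.
apply: eq_bigr => i _.
rewrite Ex_sum; last first.
  move=> j; have [h1 h2] := h j i.
  apply: rgood_add; first by apply: rgood_mul => //; apply: rgood_cst.
  by apply: rgood_opp; apply: rgood_mul => //; apply: rgood_cst.
apply: eq_bigr => j _; have [h1 h2] := h j i.
rewrite Ex_add; last 2 first.
- by apply: rgood_mul => //; apply: rgood_cst.
- by apply: rgood_opp; apply: rgood_mul => //; apply: rgood_cst.
rewrite !mxE /=.
rewrite Ex_scale //.
have -> : Ex P (fun w => - (complex.Im (G i j) * complex.Im (Tm w j i))) =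
   Ex P (fun w => (- complex.Im (G i j)) * complex.Im (Tm w j i)).
  by apply: Ex_ext => w; rewrite mulNr.
by rewrite (Ex_scale _ _ h2) mulNr.
Qed.

End ExTr.

Set Implicit Arguments. Unset Strict Implicit. Unset Printing Implicit Defensive.
Import Order.TTheory GRing.Theory Num.Theory.
Local Open Scope ring_scope.


Section Adj.
Variable R : realType.
Local Notation C := (R[i]).
Lemma adjmx_mul m n p (A : 'M[C]_(m, n)) (B : 'M[C]_(n, p)) :
  adjmx (A *m B) = adjmx B *m adjmx A.
Proof. by rewrite /adjmx map_mxM trmx_mul. Qed.
Lemma adjmxK m n (A : 'M[C]_(m, n)) : adjmx (adjmx A) = A.
Proof. by apply/matrixP => i j; rewrite !mxE conjCK. Qed.
Lemma adjmxE m n (A : 'M[C]_(m, n)) i j : adjmx A i j = Num.conj (A j i).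
Proof. by rewrite !mxE. Qed.
Lemma tpow_mul d (A B : 'M[C]_d) k : tpow (A *m B) k = tpow A k *m tpow B k.
Proof. by elim: k => [|k ih] /=; [rewrite mul1mx | rewrite tensmx_mul ih]. Qed.
End Adj.

Section Chan.
Variable R : realType.
Local Notation C := (R[i]).
Variable d : nat.
Variable E : 'M[C]_d -> 'M[C]_d.
Hypothesis hlin : forall (a : C) X Y, E (a *: X + Y) = a *: E X + E Y.
Variable v0 : 'cV[C]_d.

Lemma E0 : E 0 = 0.
Proof.
have h := hlin 1 0 0; rewrite scaler0 addr0 scale1r in h.
by apply: (addrI (E 0)); rewrite addr0 -h.
Qed.
Lemma E_add X Y : E (X + Y) = E X + E Y.
Proof. by have := hlin 1 X Y; rewrite !scale1r. Qed.
Lemma E_scale a X : E (a *: X) = a *: E X.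
Proof. by rewrite -[a *: X]addr0 hlin E0 addr0. Qed.
Lemma E_sum (I : Type) (s : seq I) (F : I -> 'M[C]_d) : E (\sum_(i <- s) F i) = \sum_(i <- s) E (F i).
Proof. exact: (big_morph _ E_add E0). Qed.

Definition P0 := v0 *m adjmx v0.
Definition rhoA (A : 'M[C]_d) := A *m P0 *m adjmx A.
Definition Kc (c e a b : 'I_d) := E (delta_mx c e) a b.
Definition zf (rho : 'M[C]_d) := \sum_a \sum_b \sum_c \sum_e
  Kc c e a b * (rho c e * (rho b a * 1)).
Definition zb (rho : 'M[C]_d) := \sum_a \sum_b \sum_c \sum_e
  Num.conj (Kc c e a b) * (rho e c * (rho a b * 1)).

Lemma E_entry rho a b : E rho a b = \sum_c \sum_e rho c e * Kc c e a b.
Proof.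
rewrite {1}(matrix_sum_delta rho) E_sum summxE; apply: eq_bigr => c _.
rewrite E_sum summxE; apply: eq_bigr => e _.
by rewrite E_scale mxE.
Qed.

Lemma quad (psi : 'cV[C]_d) X :
  (adjmx psi *m X *m psi) 0 0 = \sum_a \sum_b X a b * (psi *m adjmx psi) b a.
Proof.
rewrite mxE; under eq_bigr do rewrite mxE mulr_suml.
rewrite exchange_big; apply: eq_bigr => a _; apply: eq_bigr => b _.
rewrite [(psi *m _) b a]mxE big_ord1.
change (adjmx psi 0 a * X a b * psi b 0 = X a b * (psi b 0 * adjmx psi 0 a)).
ring.
Qed.

Lemma fE_z A : fE E (A *m v0) = complex.Re (zf (rhoA A)).
Proof.
rewrite /fE; congr complex.Re.
have -> : A *m v0 *m adjmx (A *m v0) = rhoA A.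
  by rewrite /rhoA /P0 adjmx_mul !mulmxA.
rewrite quad /zf; have -> : A *m v0 *m adjmx (A *m v0) = rhoA A.
  by rewrite /rhoA /P0 adjmx_mul !mulmxA.
apply: eq_bigr => a _; apply: eq_bigr => b _.
rewrite E_entry mulr_suml; apply: eq_bigr => c _.
rewrite mulr_suml; apply: eq_bigr => e _.
ring.
Qed.

Lemma zf_form : isform 2 zf.
Proof.
do 4! (apply: form_sum => ?).
by apply: form_scale; apply: formS; apply: formS; apply: form_const.
Qed.

Lemma zb_form : isform 2 zb.
Proof.
do 4! (apply: form_sum => ?).
by apply: form_scale; apply: formS; apply: formS; apply: form_const.
Qed.

Lemma rho_herm A c e : Num.conj (rhoA A c e) = rhoA A e c.
Proof.
have h : adjmx (rhoA A) = rhoA A.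
  by rewrite /rhoA /P0 !adjmx_mul !adjmxK !mulmxA.
by rewrite -adjmxE h.
Qed.

Lemma zb_conj A : zb (rhoA A) = Num.conj (zf (rhoA A)).
Proof.
rewrite /zb /zf rmorph_sum; apply: eq_bigr => a _.
rewrite rmorph_sum; apply: eq_bigr => b _.
rewrite rmorph_sum; apply: eq_bigr => c _.
rewrite rmorph_sum; apply: eq_bigr => e _.
rewrite !rmorphM rmorph1 -[rhoA A e c]rho_herm -[rhoA A a b]rho_herm. reflexivity.
Qed.

Definition phi4 rho := (zf rho + zb rho) * (zf rho + zb rho).

Lemma phi4_form : isform 4 phi4.
Proof. exact: (form_mul (k := 2) (l := 2)) (form_add zf_form zb_form) (form_add zf_form zb_form). Qed.

Lemma Re_sq (z : C) : complex.Re ((z + Num.conj z) * (z + Num.conj z)) = 4 * complex.Re z ^+ 2.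
Proof.
case: z => a b; rewrite Re_mul !Re_add !Im_add /=.
ring.
Qed.

Lemma fE2_phi4 A : fE E (A *m v0) ^+ 2 = 4^-1 * complex.Re (phi4 (rhoA A)).
Proof.
rewrite fE_z /phi4 zb_conj Re_sq mulrA mulVf ?mul1r //.
Qed.

Lemma tpow_rho A k : tpow (rhoA A) k = tpow A k *m tpow P0 k *m tpow (adjmx A) k.
Proof. by rewrite /rhoA !tpow_mul. Qed.

Lemma rgood_form {dT : measure_display} (T : measurableType dT) (V : T -> 'M[C]_d) k phi :
  isform k phi -> mgood V -> rgood (fun u => complex.Re (phi (rhoA (V u)))).
Proof.
move=> [G hG] hV.
under eq_fun do rewrite hG tpow_rho.
apply: rgood_Re_tr; apply: mgood_mul; first apply: mgood_mul.
- exact: mgood_tpow.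
- exact: mgood_cst.
- by apply: mgood_tpow; apply: mgood_adj.
Qed.

Lemma transfer {dH : measure_display} (TH : measurableType dH) (PH : probability TH R)
  (UH : TH -> 'M[C]_d) {dD : measure_display} (TD : measurableType dD) (PD : probability TD R)
  (W : TD -> 'M[C]_d) :
  mgood UH -> unitary_design 4 PH UH PD W -> forall k, (k <= 4)%N -> forall phi, isform k phi ->
  Ex PD (fun u => complex.Re (phi (rhoA (W u)))) = Ex PH (fun u => complex.Re (phi (rhoA (UH u)))).
Proof.
move=> hH [hWu hWm hdes] k hk phi [G hG].
have hW : mgood W by exact: mgood_unitary.
have gW : mgood (fun u => tpow (W u) k *m tpow P0 k *m tpow (adjmx (W u)) k).
  apply: mgood_mul; first apply: mgood_mul.
  - exact: mgood_tpow.
  - exact: mgood_cst.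
  - by apply: mgood_tpow; apply: mgood_adj.
have gH : mgood (fun u => tpow (UH u) k *m tpow P0 k *m tpow (adjmx (UH u)) k).
  apply: mgood_mul; first apply: mgood_mul.
  - exact: mgood_tpow.
  - exact: mgood_cst.
  - by apply: mgood_tpow; apply: mgood_adj.
under eq_fun do rewrite hG tpow_rho.
rewrite (Ex_Re_tr _ _ gW) (hdes k hk (tpow P0 k)).
under [in RHS]eq_fun do rewrite hG tpow_rho.
by rewrite (Ex_Re_tr _ _ gH).
Qed.

End Chan.

Set Implicit Arguments. Unset Strict Implicit. Unset Printing Implicit Defensive.
Import Order.TTheory GRing.Theory Num.Theory.
Local Open Scope ring_scope.


Section Om.
Variable R : realType.
Context {dO : measure_display} (Om : measurableType dO) (P : probability Om R).
Variables (M N : nat) (X : 'I_M -> 'I_N -> Om -> bool).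
Hypothesis hX : forall i s, measurable (X i s @^-1` [set true]).

Definition ind (x : {ffun 'I_M -> {ffun 'I_N -> bool}}) (w : Om) : R :=
  ([forall i, forall s, X i s w == x i s])%:R.

Lemma ind_pick (G : {ffun 'I_M -> {ffun 'I_N -> bool}} -> R) w :
  \sum_x ind x w * G x = G [ffun i => [ffun s => X i s w]].
Proof.
rewrite (bigD1 [ffun i => [ffun s => X i s w]]) //= big1 ?addr0.
  suff -> : ind [ffun i => [ffun s => X i s w]] w = 1 by rewrite mul1r.
  rewrite /ind; have -> // : [forall i, forall s, X i s w == [ffun i => [ffun s => X i s w]] i s].
  by apply/forallP => i; apply/forallP => s; rewrite !ffunE.
move=> x nx; rewrite /ind; have [h|h] := boolP [forall i, forall s, X i s w == x i s]; last by rewrite mul0r.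
exfalso; move/negP: nx; apply; apply/eqP/ffunP => i; apply/ffunP => s.
by rewrite !ffunE; move/forallP: h => /(_ i) /forallP /(_ s) /eqP.
Qed.

Lemma rgood_ind x : rgood (ind x).
Proof.
have e : forall w, ind x w = \prod_i \prod_s (X i s w == x i s)%:R.
  move=> w; rewrite /ind; have [h|h] := boolP [forall i, forall s, X i s w == x i s].
    rewrite big1 // => i _; rewrite big1 // => s _.
    by move/forallP: h => /(_ i) /forallP /(_ s) ->.
  move/forallPn: h => [i /forallPn [s hs]].
  rewrite (bigD1 i) //= (bigD1 s) //= (negbTE hs) mul0r mul0r //.
have -> : ind x = fun w => \prod_i \prod_s (X i s w == x i s)%:R by apply: funext.
apply: rgood_prod => i; apply: rgood_prod => s.
have gi : rgood (\1_(X i s @^-1` [set true]) : Om -> R).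
  split; first exact: measurable_indic.
  by exists 1 => w; rewrite indicE; case: (w \in _); rewrite ?normr1 ?normr0.
have ei : forall w, (X i s w)%:R = (\1_(X i s @^-1` [set true]) w : R).
  move=> w; rewrite indicE; congr (_%:R).
  case: (boolP (w \in (X i s @^-1` [set true])%classic)) => h; rewrite ?h; first by move/set_mem: h => /= ->.
  case hx: (X i s w) => //; exfalso; move/negP: h; apply; exact: mem_set.
case: (x i s).
  by apply: (rgood_ext _ gi) => w; rewrite eqb_id ei.
apply: (@rgood_ext _ _ _ _ (fun w => 1 + - \1_(X i s @^-1` [set true]) w)).
  by move=> w; rewrite eqbF_neg -ei; case: (X i s w); rewrite /= ?subrr ?subr0.
by apply: rgood_add; [apply: rgood_cst | apply: rgood_opp].
Qed.


Lemma Ex_pick (G : {ffun 'I_M -> {ffun 'I_N -> bool}} -> R) :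
  Ex P (fun w => G [ffun i => [ffun s => X i s w]]) = \sum_x G x * Ex P (ind x).
Proof.
rewrite -(Ex_ext P (fun w => ind_pick G w)).
rewrite Ex_sum; last by move=> x; apply: rgood_mul; [apply: rgood_ind | apply: rgood_cst].
apply: eq_bigr => x _.
rewrite -Ex_scale; last exact: rgood_ind.
by apply: Ex_ext => w; rewrite mulrC.
Qed.

Definition fh (x : {ffun 'I_M -> {ffun 'I_N -> bool}}) : R :=
  ((M * N)%:R)^-1 * \sum_(i < M) \sum_(s < N) (x i s)%:R.

Lemma Fhat_fh w : Fhat R X w = fh [ffun i => [ffun s => X i s w]].
Proof.
rewrite /Fhat /fh; congr (_ * _); apply: eq_bigr => i _; apply: eq_bigr => s _.
by rewrite !ffunE.
Qed.

Lemma Var_Fhat : Var P (Fhat R X) =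
  \sum_x (fh x - \sum_y fh y * Ex P (ind y)) ^+ 2 * Ex P (ind x).
Proof.
have eF : Ex P (Fhat R X) = \sum_y fh y * Ex P (ind y).
  by rewrite -Ex_pick; apply: Ex_ext => w; rewrite Fhat_fh.
rewrite /Var eF -(Ex_pick (fun x => (fh x - \sum_y fh y * Ex P (ind y)) ^+ 2)).
by apply: Ex_ext => w; rewrite Fhat_fh.
Qed.

End Om.

Unset Implicit Arguments.
Import Order.TTheory GRing.Theory Num.Theory.
Local Open Scope ring_scope.
Import numFieldTopology.Exports numFieldNormedType.Exports.

Lemma bern_sum (R : realType) (p : R) : \sum_(b : bool) bern p b = 1.
Proof. by rewrite big_bool /= addrC subrK. Qed.
Lemma bern_m1 (R : realType) (p : R) : \sum_(b : bool) bern p b * (b : nat)%:R = p.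
Proof. by rewrite big_bool /= mulr1 mulr0 addr0. Qed.
Lemma bern_m2 (R : realType) (p : R) : \sum_(b : bool) bern p b * (b : nat)%:R ^+ 2 = p.
Proof. by rewrite big_bool /= expr1n mulr1 expr0n mulr0 addr0. Qed.

Arguments bern_sum {R} p. Arguments bern_m1 {R} p. Arguments bern_m2 {R} p.

Theorem proposition7 (R : realType) (d : nat) (E : 'M[R[i]]_d -> 'M[R[i]]_d)
  (v0 : 'cV[R[i]]_d) (M N : nat)
  (dH : measure_display) (TH : measurableType dH) (PH : probability TH R)
  (UH : TH -> 'M[R[i]]_d)
  (dD : measure_display) (TD : measurableType dD) (PD : probability TD R)
  (W : TD -> 'M[R[i]]_d)
  (dO : measure_display) (Om : measurableType dO) (P : probability Om R)
  (V : 'I_M -> Om -> 'M[R[i]]_d) (X : 'I_M -> 'I_N -> Om -> bool) :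
  quantum_channel E ->
  adjmx v0 *m v0 = 1%:M ->
  (2 <= M)%N -> (2 <= N)%N ->
  is_haar PH UH ->
  unitary_design 4 PH UH PD W ->
  sampling_scheme P E v0 V X PD W ->
  let F := Ex PH (fun u => fE E (UH u *m v0)) in
  let F2 := Ex PH (fun u => fE E (UH u *m v0) ^+ 2) in
  let D2 := F2 - F ^+ 2 in
  Var P (Fhat R X) = D2 / M%:R + (F - F2) / (M * N)%:R /\
  Var P (Fhat R X) <= D2 / M%:R + (4 * M * N)%:R^-1.
Proof.
move=> [hlin _ _] hv0 hM hN [hHu hHm _] hdes [hVu hVm hXm hsamp] F F2 D2.
have gH : mgood UH by exact: mgood_unitary.
have gW : mgood W by case: hdes => hWu hWm _; exact: mgood_unitary.
pose p u := fE E (W u *m v0).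
pose p' u := fE E (UH u *m v0).
have rp : rgood p.
  apply: (rgood_ext _ (rgood_form v0 (zf_form E) gW)) => u.
  by rewrite /p (fE_z hlin).
have rp' : rgood p'.
  apply: (rgood_ext _ (rgood_form v0 (zf_form E) gH)) => u.
  by rewrite /p' (fE_z hlin).
pose q (y : {ffun 'I_N -> bool}) := Ex PD (fun u => \prod_(s < N) bern (p u) (y s)).
have rbern : forall y : {ffun 'I_N -> bool}, rgood (fun u => \prod_(s < N) bern (p u) (y s)).
  move=> y; apply: rgood_prod => s; rewrite /bern; case: (y s) => //.
  by apply: rgood_add; [apply: rgood_cst | apply: rgood_opp].
have prob : forall x : {ffun 'I_M -> {ffun 'I_N -> bool}}, Ex P (ind R X x) = \prod_(i < M) q (x i).
  move=> x.
  pose h0 := fun (_ : 'I_M) (_ : 'M[R[i]]_d) => (1 : R).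
  have h1 : forall i : 'I_M, cont_test (h0 i).
    move=> i; exists (fun _ => 1); split; last by []. exact: cst_continuous.
  have := hsamp h0 h1 (fun i s => x i s).
  have -> : Ex P (ind R X x) = Ex P (fun w => \prod_(i < M) h0 i (V i w) *
       ([forall i, forall s, X i s w == x i s])%:R).
    by apply: Ex_ext => w; rewrite big1 // mul1r.
  move=> ->; apply: eq_bigr => i _; apply: Ex_ext => u; rewrite mul1r.
  by [].
have momq : forall G : {ffun 'I_N -> bool} -> R, \sum_y q y * G y =
    Ex PD (fun u => \sum_(y : {ffun 'I_N -> bool}) (\prod_(s < N) bern (p u) (y s)) * G y).
  move=> G; rewrite Ex_sum; last by move=> y; apply: rgood_mul => //; apply: rgood_cst.
  apply: eq_bigr => y _; rewrite mulrC -Ex_scale //; apply: Ex_ext => u; rewrite mulrC.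
  by [].
pose g (y : {ffun 'I_N -> bool}) : R := \sum_(s < N) (y s : nat)%:R.
pose a := Ex PD p.
pose b := Ex PD (fun u => p u ^+ 2).
have q0 : \sum_y q y = 1.
  have := momq (fun _ => 1); under eq_bigr do rewrite mulr1; move=> ->.
  transitivity (Ex PD (fun _ => 1 : R)); last exact: Ex_cst.
  apply: Ex_ext => u; under eq_bigr do rewrite mulr1.
  exact: (@wmom0 _ _ _ (bern_sum (p u)) N).
have q1 : \sum_y q y * g y = N%:R * a.
  rewrite momq /a -Ex_scale //; apply: Ex_ext => u.
  rewrite /g (@wmom1 _ _ _ (fun b : bool => (b : nat)%:R) (bern_sum (p u))).
  by rewrite bern_m1.
have q2 : \sum_y q y * g y ^+ 2 = N%:R * a + (N * N.-1)%:R * b.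
  rewrite momq /a /b -!Ex_scale //; last by apply: rgood_mul.
  rewrite -Ex_add; last 2 first.
  - by apply: rgood_mul => //; apply: rgood_cst.
  - by apply: rgood_mul; [apply: rgood_cst | apply: rgood_mul].
  apply: Ex_ext => u.
  rewrite /g (@wmom2 _ _ _ (fun b : bool => (b : nat)%:R) (bern_sum (p u))).
  by rewrite bern_m1 bern_m2.
have hMn : (M%:R : R) != 0 by rewrite pnatr_eq0 -lt0n (leq_trans _ hM).
have hNn : (N%:R : R) != 0 by rewrite pnatr_eq0 -lt0n (leq_trans _ hN).
pose kap : R := ((M * N)%:R)^-1.
pose pr (x : {ffun 'I_M -> {ffun 'I_N -> bool}}) := \prod_(i < M) q (x i).
have efh : forall x, fh R x = kap * \sum_(i < M) g (x i) by [].
have ec : \sum_y fh R y * Ex P (ind R X y) = a.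
  transitivity (kap * \sum_y pr y * \sum_(i < M) g (y i)).
    rewrite mulr_sumr; apply: eq_bigr => y _; rewrite prob efh /pr; ring.
  rewrite (@wmom1 _ _ q g q0 M) q1 /kap natrM.
  by field; apply/andP; split.
have eV : Var P (Fhat R X) = kap ^+ 2 * (M%:R * (N%:R * a + (N * N.-1)%:R * b) + (M * M.-1)%:R * (N%:R * a) ^+ 2)
   - 2 * kap * a * (M%:R * (N%:R * a)) + a ^+ 2.
rewrite (Var_Fhat P hXm) ec.
transitivity (\sum_x (kap ^+ 2 * (pr x * (\sum_(i < M) g (x i)) ^+ 2)
     - (2 * kap * a) * (pr x * \sum_(i < M) g (x i)) + a ^+ 2 * pr x)).
  by apply: eq_bigr => x _; rewrite prob efh /pr; ring.
rewrite big_split sumrB /= -!mulr_sumr.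
rewrite (@wmom0 _ _ q q0 M) (@wmom1 _ _ q g q0 M) (@wmom2 _ _ q g q0 M) q1 q2.
  by rewrite mulr1.
have eaF : a = F.
  rewrite /a /F; transitivity (Ex PD (fun u => complex.Re (zf E (rhoA v0 (W u))))).
    by apply: Ex_ext => u; rewrite /p (fE_z hlin).
  rewrite (transfer v0 gH hdes (isT : (2 <= 4)%N) (zf_form E)).
  by apply: Ex_ext => u; rewrite (fE_z hlin).
have ebF2 : b = F2.
  rewrite /b /F2; transitivity (Ex PD (fun u => 4^-1 * complex.Re (phi4 E (rhoA v0 (W u))))).
    by apply: Ex_ext => u; rewrite /p (fE2_phi4 hlin).
  rewrite Ex_scale; last exact: (rgood_form v0 (phi4_form E) gW).
  rewrite (transfer v0 gH hdes (isT : (4 <= 4)%N) (phi4_form E)) -Ex_scale; last exact: (rgood_form v0 (phi4_form E) gH).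
  by apply: Ex_ext => u; rewrite (fE2_phi4 hlin).
have eN1 : (N.-1)%:R = N%:R - 1 :> R by rewrite -subn1 natrB // (leq_trans _ hN).
have eM1 : (M.-1)%:R = M%:R - 1 :> R by rewrite -subn1 natrB // (leq_trans _ hM).
have eq1 : Var P (Fhat R X) = D2 / M%:R + (F - F2) / (M * N)%:R.
  rewrite eV /D2 -eaF -ebF2 /kap !natrM eN1 eM1.
  by field; apply/andP; split.
split => //.
rewrite eq1 lerD2l.
have h14 : F - F2 <= 4^-1.
  have h0 : 0 <= Ex PH (fun u => p' u ^+ 2 + ((-1) * p' u + 4^-1)).
    apply: Ex_ge0 => u.
    have -> : p' u ^+ 2 + ((-1) * p' u + 4^-1) = (p' u - 2^-1) ^+ 2 by field.
    exact: sqr_ge0.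
  rewrite Ex_add in h0; last 2 first.
  - exact: rgood_mul.
  - by apply: rgood_add; [apply: rgood_mul; [apply: rgood_cst|] | apply: rgood_cst].
  rewrite Ex_add in h0; last 2 first.
  - by apply: rgood_mul; [apply: rgood_cst|].
  - exact: rgood_cst.
  rewrite Ex_scale // Ex_cst in h0.
  rewrite /F /F2; rewrite -/(p' _) in h0 *.
  lra.
have -> : ((4 * M * N)%:R^-1 : R) = 4^-1 / (M * N)%:R.
  by rewrite !natrM; field; apply/andP; split.
by apply: ler_wpM2r => //; rewrite invr_ge0 ler0n.
Qed.
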